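(* Let $\lambda\in\mathbb{R}$, let $r,n\ge1$ be integers and let $0\le k\le nr$. Then \[ S_\lambda^{(r,r)}(n,k)=\frac{(-1)^k}{k!}\sum_{p=0}^{k}(-1)^p\binom{k}{p}\big((p)_r\big)_{n,\lambda}. \]
   Context: Notation: $(x)_0=1$, $(x)_m=x(x-1)\cdots(x-m+1)$ for $m\ge1$; the generalized (degenerate) falling factorial is $(y)_{0,\lambda}=1$, $(y)_{n,\lambda}=y(y-\lambda)\cdots(y-(n-1)\lambda)$ for $n\ge1$. Let $D=\frac{d}{dx}$ and let $x$ also denote multiplication by $x$. The numbers $S_\lambda^{(r,r)}(n,k)$, $0\le k\le nr$ (generalized degenerate $(r,r)$-Stirling numbers of the second kind) are defined by the operator identity \[ \prod_{j=0}^{n-1}\Big(x^{r}D^{r}-j\lambda\Big)=\sum_{k=0}^{nr}S_\lambda^{(r,r)}(n,k)\,x^{k}D^{k}. \] *)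

(* Defs.v *)
From mathcomp Require Import all_boot all_order all_algebra.
Set Implicit Arguments. Unset Strict Implicit. Unset Printing Implicit Defensive.
Import Order.TTheory GRing.Theory Num.Theory.
Local Open Scope ring_scope.

Definition gen_falling (R : nzRingType) (lam y : R) (n : nat) : R :=
  \prod_(i < n) (y - i%:R * lam).

Definition xkDk (R : nzRingType) (k : nat) (p : {poly R}) : {poly R} :=
  'X^k * p^`(k).

Definition opL (R : nzRingType) (r : nat) (lam : R) (j : nat) (p : {poly R})
  : {poly R} := xkDk r p - (j%:R * lam) *: p.

(* The composed operator prod_{j=0}^{n-1} (x^r D^r - j lambda)
   = L_0 o L_1 o ... o L_{n-1}  (the factors commute). *)
Fixpoint opProd (R : nzRingType) (r : nat) (lam : R) (n : nat) (p : {poly R})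
  : {poly R} :=
  match n with
  | 0 => p
  | m.+1 => opProd r lam m (opL r lam m p)
  end.

(* c : nat -> R is a family of coefficients S(n,k), 0 <= k <= n r, satisfying
   the defining operator identity of the generalized degenerate (r,r)-Stirling
   numbers of the second kind (as operators on polynomials). *)
Definition is_Srr (R : nzRingType) (lam : R) (r n : nat) (c : nat -> R) : Prop :=
  forall p : {poly R},
    opProd r lam n p = \sum_(k < (n * r).+1) c k *: xkDk k p.

(* Main.v *)
Require Import Defs.
From mathcomp Require Import all_boot all_order all_algebra.
From mathcomp Require Import zify ring lra.
Set Implicit Arguments. Unset Strict Implicit.
Import Order.TTheory GRing.Theory Num.Theory.
Local Open Scope ring_scope.

Lemma coef_xkDk (R : realFieldType) k (p : {poly R}) i :
  (xkDk k p)`_i = (i ^_ k)%:R * p`_i.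
Proof.
rewrite /xkDk coefXnM; case: ltnP => hik.
  by rewrite ffact_small // mul0r.
by rewrite coef_derivn subnKC // mulr_natl.
Qed.

Lemma coef_opL (R : realFieldType) r lam j (p : {poly R}) i :
  (opL r lam j p)`_i = ((i ^_ r)%:R - j%:R * lam) * p`_i.
Proof. by rewrite /opL coefB coef_xkDk coefZ mulrBl. Qed.

Lemma coef_opProd (R : realFieldType) r lam m (p : {poly R}) i :
  (opProd r lam m p)`_i = gen_falling lam ((i ^_ r)%:R) m * p`_i.
Proof.
elim: m p => [|m IH] p /=; first by rewrite /gen_falling big_ord0 mul1r.
by rewrite IH coef_opL /gen_falling big_ord_recr /= mulrA.
Qed.

Definition fS (R : realFieldType) (lam : R) r n (i : nat) :=
  gen_falling lam ((i ^_ r)%:R) n.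

Lemma Srr_iff (R : realFieldType) (lam : R) r n c :
  is_Srr lam r n c <->
  (forall i : nat, fS lam r n i = \sum_(k < (n * r).+1) c k * (i ^_ k)%:R).
Proof.
split.
  move=> H i; have := congr1 (fun q : {poly R} => q`_i) (H ('X^i)%R).
  rewrite coef_opProd coefXn eqxx mulr1 /fS => ->.
  rewrite coef_sum; apply: eq_bigr => k _.
  by rewrite coefZ coef_xkDk coefXn eqxx mulr1.
move=> H p; apply/polyP => i.
rewrite coef_opProd coef_sum -/(fS lam r n i) H mulr_suml.
apply: eq_bigr => k _; by rewrite coefZ coef_xkDk mulrA.
Qed.

Lemma coef_XaddC_pow (R : realFieldType) p j :
  ((('X : {poly R}) + 1) ^+ p)`_j = ('C(p, j))%:R.
Proof.
elim: p j => [|p IH] j.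
  by rewrite expr0 coef1; case: j.
rewrite exprSr mulrDr mulr1 coefD coefMX.
by case: j => [|j] /=; rewrite !IH ?add0r ?bin0 // binS natrD addrC.
Qed.

Lemma alt_binom (R : realFieldType) m j :
  \sum_(p < m.+1) (-1) ^+ p * ('C(m, p))%:R * ('C(p, j))%:R
    = (-1) ^+ m * (j == m)%:R :> R.
Proof.
have E : (1 - (('X : {poly R}) + 1)) ^+ m = ((-1) ^+ m)%:P * 'X^m.
  have -> : 1 - ('X + 1) = (-1) * 'X :> {poly R} by ring.
  rewrite exprMn; congr (_ * _).
  by rewrite rmorphXn rmorphN1.
have := congr1 (fun q : {poly R} => q`_j) E.
rewrite coefCM coefXn => <-.
rewrite exprDn coef_sum; apply: eq_bigr => p _.
rewrite coefMn expr1n mul1r.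
have -> : (- ('X + 1)) ^+ p = ((-1) ^+ p)%:P * ('X + 1) ^+ p :> {poly R}.
  by rewrite (exprNn ('X + 1)) rmorphXn rmorphN1.
rewrite coefCM coef_XaddC_pow -mulr_natr.
by rewrite mul1r -[RHS]mulr_natr mulrAC.
Qed.

Lemma forward_core (R : realFieldType) (f c : nat -> R) N :
  (forall m, f m = \sum_(k < N.+1) c k * (m ^_ k)%:R) ->
  forall k, (k <= N)%N -> c k = (-1) ^+ k / (k`!)%:R *
     \sum_(p < k.+1) (-1) ^+ p * ('C(k, p))%:R * f p.
Proof.
move=> H k hk.
have G : forall j : nat, \sum_(p < k.+1) (-1) ^+ p * ('C(k, p))%:R * (c j * (p ^_ j)%:R)
   = c j * (j`!)%:R * ((-1) ^+ k * (j == k)%:R).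
  move=> j; rewrite -alt_binom mulr_sumr; apply: eq_bigr => p _.
  rewrite -bin_ffact natrM; ring.
have S : \sum_(p < k.+1) (-1) ^+ p * ('C(k, p))%:R * f p = (-1) ^+ k * (k`!)%:R * c k.
  under eq_bigr => p _ do rewrite H mulr_sumr.
  rewrite exchange_big /=.
  under eq_bigr => j _ do rewrite G.
  have hk' : (k < N.+1)%N by [].
  rewrite (bigD1 (Ordinal hk')) //= big1 ?addr0.
    by rewrite eqxx mulr1; ring.
  move=> j /eqP hj.
  have -> : (j == k :> nat) = false.
    by apply/eqP => e; apply: hj; apply: val_inj.
  by rewrite mulr0 mulr0.
rewrite S.
have hs : (-1) ^+ k * (-1) ^+ k = 1 :> R by rewrite -exprMn mulrNN mulr1 expr1n.
have hf : (k`!)%:R != 0 :> R by rewrite pnatr_eq0 -lt0n fact_gt0.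
have -> : (-1) ^+ k / (k`!)%:R * ((-1) ^+ k * (k`!)%:R * c k)
   = ((-1) ^+ k * (-1) ^+ k) * ((k`!)%:R / (k`!)%:R) * c k by ring.
by rewrite hs divff // !mul1r.
Qed.

Lemma widen_sum (R : realFieldType) (g : nat -> R) k N :
  (k <= N)%N -> (forall p, (k < p)%N -> g p = 0) ->
  \sum_(p < k.+1) g p = \sum_(p < N.+1) g p.
Proof.
move=> hk hg; rewrite (big_ord_widen N.+1 g) // big_mkcond /=.
apply: eq_bigr => p _; case: ifP => // /negbT; rewrite -leqNgt => hp.
by rewrite hg.
Qed.

Lemma backward_core (R : realFieldType) (f c : nat -> R) N :
  (forall k, (k <= N)%N -> c k = (-1) ^+ k / (k`!)%:R *
     \sum_(p < k.+1) (-1) ^+ p * ('C(k, p))%:R * f p) ->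
  forall m, (m <= N)%N -> f m = \sum_(k < N.+1) c k * (m ^_ k)%:R.
Proof.
move=> hc m hm.
have E1 : forall k : 'I_N.+1, c k * (m ^_ k)%:R = \sum_(p < N.+1)
    ((-1) ^+ k * ('C(m, k))%:R * ('C(k, p))%:R) * ((-1) ^+ p * f p).
  move=> k; have hk : (k <= N)%N by rewrite -ltnS.
  rewrite (hc k hk) (widen_sum (g:=fun p => (-1) ^+ p * ('C(k, p))%:R * f p) hk); last first.
    by move=> p hp; rewrite bin_small // mulr0 mul0r.
  rewrite -bin_ffact natrM.
  have hf : (k`!)%:R != 0 :> R by rewrite pnatr_eq0 -lt0n fact_gt0.
  set S := \sum_(p < N.+1) _.
  have -> : (-1) ^+ k / (k`!)%:R * S * (('C(m, k))%:R * (k`!)%:R)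
     = (-1) ^+ k * ('C(m, k))%:R * S * ((k`!)%:R / (k`!)%:R) by ring.
  rewrite divff // mulr1 /S mulr_sumr; apply: eq_bigr => p _; ring.
rewrite (eq_bigr _ (fun k _ => E1 k)) exchange_big /=.
under eq_bigr => p _ do rewrite -mulr_suml.
have E2 : forall p : 'I_N.+1, \sum_(k < N.+1) (-1) ^+ k * ('C(m, k))%:R * ('C(k, p))%:R
    = (-1) ^+ m * (p == m :> nat)%:R :> R.
  move=> p; rewrite -(@alt_binom R m p); symmetry.
  apply: (widen_sum (g:=fun k => (-1) ^+ k * ('C(m, k))%:R * ('C(k, p))%:R) hm).
  by move=> k hk; rewrite bin_small // mulr0 mul0r.
under eq_bigr => p _ do rewrite E2.
have hm' : (m < N.+1)%N by [].
rewrite (bigD1 (Ordinal hm')) //= big1 ?addr0.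
  rewrite eqxx mulr1 mulrA -exprMn mulrNN mulr1 expr1n mul1r //.
move=> j /eqP hj.
have -> : (j == m :> nat) = false.
  by apply/eqP => e; apply: hj; apply: val_inj.
by rewrite mulr0 mul0r.
Qed.

Lemma agree_all (R : realFieldType) (p q : {poly R}) N :
  (size p <= N.+1)%N -> (size q <= N.+1)%N ->
  (forall m, (m <= N)%N -> p.[m%:R] = q.[m%:R]) -> p = q.
Proof.
move=> hp hq h; apply/eqP; rewrite -subr_eq0; apply/eqP.
apply: (@roots_geq_poly_eq0 _ _ [seq i%:R | i <- iota 0 N.+1]).
- apply/allP => x /mapP [i hi ->].
  rewrite mem_iota add0n ltnS in hi.
  by rewrite /root hornerD hornerN h // subrr.
- rewrite map_inj_uniq ?iota_uniq // => a b /eqP; rewrite eqr_nat => /eqP //.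
- rewrite size_map size_iota; apply: leq_trans (size_polyD _ _) _.
  by rewrite size_polyN geq_max hp hq.
Qed.

Definition ffp (R : realFieldType) (k : nat) : {poly R} :=
  \prod_(i < k) ('X - (i%:R)%:P).

Lemma ffp_eval (R : realFieldType) k m : (ffp R k).[m%:R] = (m ^_ k)%:R.
Proof.
rewrite /ffp horner_prod.
under eq_bigr => i _ do rewrite hornerXsubC.
elim: k m => [|k IH] m; first by rewrite big_ord0 ffactn0.
rewrite big_ord_recl /=; case: m => [|m].
  by rewrite subrr mul0r ffact0n.
rewrite ffactSS natrM -IH subr0; congr (_ * _).
apply: eq_bigr => i _.
by rewrite /bump /= add1n -natr1 -nat1r addrKA.
Qed.

Lemma size_prod_le (R : realFieldType) (F : nat -> {poly R}) d m :
  (forall i, (size (F i) <= d.+1)%N) ->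
  (size (\prod_(i < m) F i)%R <= (m * d).+1)%N.
Proof.
move=> hF; elim: m => [|m IH]; first by rewrite big_ord0 size_poly1.
rewrite big_ord_recr /=; apply: leq_trans (size_polyMleq _ _) _.
have := hF m; move: IH; set a := size _; set b := size _ => ha hb.
rewrite mulSn; lia.
Qed.

Lemma size_ffp (R : realFieldType) k : (size (ffp R k) <= k.+1)%N.
Proof.
have := @size_prod_le R (fun i => 'X - (i%:R)%:P) 1 k.
rewrite muln1; apply => i; by rewrite size_XsubC.
Qed.

Theorem theorem5 (R : realFieldType) (lam : R) (r n : nat)
  (hr : (1 <= r)%N) (hn : (1 <= n)%N) (c : nat -> R) :
  is_Srr lam r n c <->
  (forall k : nat, (k <= n * r)%N ->
     c k = (-1) ^+ k / (k`!)%:R *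
           \sum_(p < k.+1) (-1) ^+ p * ('C(k, p))%:R *
                           gen_falling lam ((p ^_ r)%:R) n).
Proof.
split.
  by move/Srr_iff => H; apply: (@forward_core R (fS lam r n) c (n * r) H).
move=> hc; apply/Srr_iff => i.
have B := @backward_core R (fS lam r n) c (n * r) hc.
pose Fp := \prod_(j < n) (ffp R r - (j%:R * lam)%:P).
pose Qp := \sum_(k < (n * r).+1) c k *: ffp R k.
have EF : forall m, Fp.[m%:R] = fS lam r n m.
  move=> m; rewrite /Fp horner_prod /fS /gen_falling; apply: eq_bigr => j _.
  by rewrite hornerD hornerN hornerC ffp_eval.
have EQ : forall m, Qp.[m%:R] = \sum_(k < (n * r).+1) c k * (m ^_ k)%:R.
  move=> m; rewrite /Qp horner_sum; apply: eq_bigr => k _.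
  by rewrite hornerZ ffp_eval.
have sF : (size Fp <= (n * r).+1)%N.
  apply: (@size_prod_le R (fun j => ffp R r - (j%:R * lam)%:P)) => j.
  apply: leq_trans (size_polyD _ _) _; rewrite size_polyN geq_max size_ffp /=.
  by apply: leq_trans (size_polyC_leq1 _) _.
have sQ : (size Qp <= (n * r).+1)%N.
  apply: leq_trans (size_sum _ _ _) _; apply/bigmax_leqP => k _.
  by apply: leq_trans (size_scale_leq _ _) _; apply: leq_trans (size_ffp _ _) _.
have FQ : Fp = Qp.
  apply: (agree_all sF sQ) => m hm; by rewrite EF EQ B.
by rewrite -EF FQ EQ.
Qed.
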